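(* (a) If $\tau\in\mathcal{T}$ and the space $(\mathbb{R},\tau)$ is connected and locally connected, then $\tau=\eta$. (b) More precisely: if $\xi\in\Gamma(\tau)$ for some $\tau\in\mathcal{T}$ and $(\mathbb{R},\tau)$ is connected, then $\xi$ does not have a local basis consisting of connected sets in the space $(\mathbb{R},\tau)$.
   Context: $\eta$ denotes the Euclidean topology on $\mathbb{R}$; $\mathcal{T}$ is the family of all topologies on $\mathbb{R}$ finer than $\eta$. $\mathcal{U}_\tau(x)$ is the neighborhood filter of $x$ in topology $\tau$, and $\Gamma(\tau)=\{x\in\mathbb{R}:\mathcal{U}_\eta(x)\neq\mathcal{U}_\tau(x)\}$ (the points where $\tau$ is strictly finer than $\eta$). *)

(* Defs.v *)
From Stdlib Require Import Reals.
Open Scope R_scope.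

Record is_topology (tau : (R -> Prop) -> Prop) : Prop := {
  top_empty : tau (fun _ => False);
  top_full  : tau (fun _ => True);
  top_union : forall F : (R -> Prop) -> Prop,
      (forall U, F U -> tau U) -> tau (fun x => exists U, F U /\ U x);
  top_inter : forall U V, tau U -> tau V -> tau (fun x => U x /\ V x)
}.

Definition eta (U : R -> Prop) : Prop :=
  forall x, U x -> exists e, 0 < e /\ forall y, Rabs (y - x) < e -> U y.

(* tau is finer than eta (tau in the family T, together with is_topology). *)
Definition finer_than_eta (tau : (R -> Prop) -> Prop) : Prop :=
  forall U, eta U -> tau U.

Definition nbhd (tau : (R -> Prop) -> Prop) (x : R) (N : R -> Prop) : Prop :=
  exists U, tau U /\ U x /\ forall y, U y -> N y.

Definition Gamma (tau : (R -> Prop) -> Prop) (x : R) : Prop :=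
  ~ (forall N, nbhd eta x N <-> nbhd tau x N).

Definition connected_in (tau : (R -> Prop) -> Prop) (A : R -> Prop) : Prop :=
  forall U V, tau U -> tau V ->
    (forall x, A x -> U x \/ V x) ->
    (exists x, A x /\ U x) -> (exists x, A x /\ V x) ->
    exists x, A x /\ U x /\ V x.

Definition space_connected (tau : (R -> Prop) -> Prop) : Prop :=
  connected_in tau (fun _ => True).

Definition has_connected_local_base (tau : (R -> Prop) -> Prop) (x : R) : Prop :=
  exists B : (R -> Prop) -> Prop,
    (forall C, B C -> nbhd tau x C /\ connected_in tau C) /\
    (forall N, nbhd tau x N -> exists C, B C /\ forall y, C y -> N y).

Definition locally_connected (tau : (R -> Prop) -> Prop) : Prop :=
  forall x, has_connected_local_base tau x.

(* Main.v *)
Require Import Defs.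
From Stdlib Require Import Reals Lra Classical.
Open Scope R_scope.

Lemma eta_lt (c : R) : eta (fun z => z < c).
Proof.
  intros x hx. exists (c - x). split; [lra|].
  intros z hz. destruct (Rabs_def2 _ _ hz). lra.
Qed.

Lemma eta_gt (c : R) : eta (fun z => c < z).
Proof.
  intros x hx. exists (x - c). split; [lra|].
  intros z hz. destruct (Rabs_def2 _ _ hz). lra.
Qed.

Lemma eta_int (a b : R) : eta (fun z => a < z < b).
Proof.
  intros x [h1 h2]. exists (Rmin (x-a) (b-x)). split.
  - apply Rmin_pos; lra.
  - intros y Hy. pose proof (Rmin_l (x-a) (b-x)). pose proof (Rmin_r (x-a) (b-x)).
    destruct (Rabs_def2 _ _ Hy). lra.
Qed.

Lemma partb tau xi : is_topology tau -> finer_than_eta tau -> Gamma tau xi ->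
  space_connected tau -> ~ has_connected_local_base tau xi.
Proof.
  intros Ht Hf HG Hc [B [HB1 HB2]].
  assert (HN: exists N, nbhd tau xi N /\ ~ nbhd eta xi N).
  { apply NNPP; intro H. apply HG. intro N. split.
    - intros [V [HV [HVx HVN]]]. exists V; auto.
    - intro HtN. apply NNPP; intro HeN. apply H. exists N; auto. }
  destruct HN as [N [HtN HeN]].
  destruct (HB2 N HtN) as [C [HBC HCN]].
  destruct (HB1 C HBC) as [[Uo [HUo [HUox HUoC]]] HCc].
  assert (Hside: (forall y, C y -> xi <= y) \/ (forall y, C y -> y <= xi)).
  { apply NNPP; intro H. apply not_or_and in H as [H1 H2].
    apply not_all_ex_not in H1 as [a Ha]. apply imply_to_and in Ha as [Ca Ha].
    apply not_all_ex_not in H2 as [b Hb]. apply imply_to_and in Hb as [Cb Hb].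
    apply HeN. exists (fun y => a < y < b). split; [apply eta_int|]. split; [lra|].
    intros y [h1 h2]. apply HCN. apply NNPP; intro Hny.
    destruct (HCc (fun z => z < y) (fun z => y < z)) as [z [_ [h3 h4]]].
    - apply Hf, eta_lt.
    - apply Hf, eta_gt.
    - intros z Cz. destruct (Rtotal_order z y) as [h|[h|h]]; auto.
      subst; contradiction.
    - exists a; split; auto; lra.
    - exists b; split; auto; lra.
    - lra. }
  destruct Hside as [Hs|Hs].
  - destruct (Hc (fun x => x < xi)
      (fun x => exists W, (W = (fun z => xi < z) \/ W = Uo) /\ W x))
      as [x [_ [h1 [W [[HW|HW] HWx]]]]].
    + apply Hf, eta_lt.
    + apply (top_union tau Ht). intros W [HW|HW]; subst W; [apply Hf, eta_gt | exact HUo].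
    + intros x _. destruct (Rtotal_order x xi) as [h|[h|h]]; [left; auto| |].
      * right. exists Uo. subst; auto.
      * right. exists (fun z => xi < z). auto.
    + exists (xi - 1). split; auto; lra.
    + exists xi. split; auto. exists Uo; auto.
    + subst W. simpl in HWx. lra.
    + subst W. specialize (Hs x (HUoC x HWx)). lra.
  - destruct (Hc (fun x => xi < x)
      (fun x => exists W, (W = (fun z => z < xi) \/ W = Uo) /\ W x))
      as [x [_ [h1 [W [[HW|HW] HWx]]]]].
    + apply Hf, eta_gt.
    + apply (top_union tau Ht). intros W [HW|HW]; subst W; [apply Hf, eta_lt | exact HUo].
    + intros x _. destruct (Rtotal_order x xi) as [h|[h|h]]; [| |left; auto].
      * right. exists (fun z => z < xi). auto.
      * right. exists Uo. subst; auto.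
    + exists (xi + 1). split; auto; lra.
    + exists xi. split; auto. exists Uo; auto.
    + subst W. simpl in HWx. lra.
    + subst W. specialize (Hs x (HUoC x HWx)). lra.
Qed.

Theorem proposition1 :
  (forall tau : (R -> Prop) -> Prop,
      is_topology tau -> finer_than_eta tau ->
      space_connected tau -> locally_connected tau ->
      forall U : R -> Prop, tau U <-> eta U)
  /\
  (forall (tau : (R -> Prop) -> Prop) (xi : R),
      is_topology tau -> finer_than_eta tau ->
      Gamma tau xi -> space_connected tau ->
      ~ has_connected_local_base tau xi).
Proof.
  split; [|exact partb].
  intros tau Ht Hf Hc Hl U. split; [|apply Hf].
  intros HU x Ux.
  assert (HnG : ~ Gamma tau x) by (intro HG; exact (partb tau x Ht Hf HG Hc (Hl x))).
  apply NNPP in HnG.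
  destruct (proj2 (HnG U) (ex_intro _ U (conj HU (conj Ux (fun y h => h)))))
    as [V [HV [HVx HVU]]].
  destruct (HV x HVx) as [e [he He]]. exists e; split; auto.
Qed.
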